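(* Let $c>0$ and let $r\geq 1$ be an integer. If $N\geq 1$ and $r-1\leq c\log N$, then $$ \sum_{a\leq N}\tau_r(a)\leq \frac{(1+c)^{r-1}}{(r-1)!}\,N(\log N)^{r-1}. $$
   Context: $a$ runs over positive integers. For an integer $r\geq1$, $\tau_r(a)$ is the number of ways to write $a$ as an ordered product of $r$ positive integers. *)

(* Defs.v *)
From mathcomp Require Import all_boot.

Set Implicit Arguments.
Unset Strict Implicit.
Unset Printing Implicit Defensive.

(* tau r a = number of ordered r-tuples (a_1,...,a_r) of positive integers
   with a_1 * ... * a_r = a.  For a >= 1 every such a_i lies in [1, a], so we
   count functions 'I_r -> {0,...,a} whose product is a (a zero entry is
   impossible since the product is a >= 1). *)
Definition tau (r a : nat) : nat :=
  #|[set f : {ffun 'I_r -> 'I_a.+1} | \prod_(i < r) (f i : nat) == a]|.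

Definition sum_tau (r N : nat) : nat := \sum_(1 <= a < N.+1) tau r a.

(* Main.v *)
Require Import Defs.
From Stdlib Require Import Reals Factorial.
Open Scope R_scope.
From Stdlib Require Import Lra Lia.


Lemma ln_le' x y : 0 < x -> x <= y -> ln x <= ln y.
Proof.
intros Hx Hxy; destruct (Rle_lt_or_eq_dec _ _ Hxy) as [H|H].
- left; apply ln_increasing; auto.
- subst; lra.
Qed.

Lemma ln_ge1 y : 0 < y -> 1 - / y <= ln y.
Proof.
intros Hy.
pose proof (exp_ineq1_le (ln (/ y))) as H.
rewrite exp_ln in H by (apply Rinv_0_lt_compat; auto).
rewrite ln_Rinv in H by auto. lra.
Qed.

Lemma pow_diff m u v : 0 <= u -> u <= v ->
  INR (S m) * u ^ m * (v - u) <= v ^ (S m) - u ^ (S m).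
Proof.
intros Hu Huv; induction m as [|m IH].
- simpl; lra.
- rewrite S_INR.
  replace (v ^ S (S m) - u ^ S (S m)) with (v * (v ^ S m - u ^ S m) + u ^ S m * (v - u))
    by (simpl; ring).
  assert (H1 : 0 <= u ^ m) by (apply pow_le; auto).
  assert (H2 : 0 <= INR (S m)) by apply pos_INR.
  assert (H3 : u * (INR (S m) * u ^ m * (v - u)) <= v * (v ^ S m - u ^ S m)).
  { apply Rmult_le_compat; auto.
    apply Rmult_le_pos; [apply Rmult_le_pos; auto|lra]. }
  replace ((INR (S m) + 1) * u ^ S m * (v - u)) with
     (u * (INR (S m) * u ^ m * (v - u)) + u ^ S m * (v - u)) by (simpl; ring).
  lra.
Qed.

Lemma pow_bin m u : 0 <= u -> u ^ (S m) + INR (S m) * u ^ m <= (u + 1) ^ (S m).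
Proof.
intros Hu; induction m as [|m IH].
- simpl; lra.
- assert (H1 : 0 <= u ^ m) by (apply pow_le; auto).
  assert (H2 : 0 <= INR (S m)) by apply pos_INR.
  replace ((u + 1) ^ S (S m)) with ((u + 1) * (u + 1) ^ S m) by (simpl; ring).
  rewrite S_INR.
  replace (u ^ S (S m) + (INR (S m) + 1) * u ^ S m) with
    ((u + 1) * (u ^ S m + INR (S m) * u ^ m) - INR (S m) * u ^ m) by (simpl; ring).
  assert (H3 : (u + 1) * (u ^ S m + INR (S m) * u ^ m) <= (u + 1) * (u + 1) ^ S m)
    by (apply Rmult_le_compat_l; lra).
  assert (0 <= INR (S m) * u ^ m) by (apply Rmult_le_pos; auto).
  lra.
Qed.

Definition B (k : nat) (y : R) := y * (ln y + INR k) ^ k / INR (fact k).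

Lemma B_mono k y z : 1 <= y -> y <= z -> B k y <= B k z.
Proof.
intros Hy Hyz; unfold B, Rdiv.
assert (Hf := INR_fact_lt_0 k).
apply Rmult_le_compat_r; [left; apply Rinv_0_lt_compat; auto|].
assert (Hl : 0 <= ln y) by (rewrite <- ln_1; apply ln_le'; lra).
assert (Hl2 : ln y <= ln z) by (apply ln_le'; lra).
assert (0 <= INR k) by apply pos_INR.
apply Rmult_le_compat; try lra.
- apply pow_le; lra.
- apply pow_incr; lra.
Qed.

Definition F (k : nat) (M0 t : R) :=
  M0 * (ln M0 - ln t + INR k) ^ (S k) / INR (fact (S k)).

Lemma F_step k M0 n : le 1 n -> INR (S n) <= M0 ->
  B k (M0 / INR (S n)) <= F k M0 (INR n) - F k M0 (INR (S n)).
Proof.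
intros Hn HM.
assert (Hn0 : 1 <= INR n) by (apply (le_INR 1); auto).
assert (HSn : INR (S n) = INR n + 1) by apply S_INR.
assert (HM0 : 0 < M0) by lra.
set (u := ln M0 - ln (INR (S n)) + INR k).
set (v := ln M0 - ln (INR n) + INR k).
assert (Hk : 0 <= INR k) by apply pos_INR.
assert (Hu : 0 <= u).
{ unfold u. assert (ln (INR (S n)) <= ln M0) by (apply ln_le'; lra). lra. }
assert (Hvu : / INR (S n) <= v - u).
{ unfold u, v.
  assert (Hp : 0 < INR (S n) * / INR n)
    by (apply Rmult_lt_0_compat; [lra | apply Rinv_0_lt_compat; lra]).
  pose proof (ln_ge1 _ Hp) as H.
  rewrite ln_mult, ln_Rinv in H; try lra; try (apply Rinv_0_lt_compat; lra).
  replace (/ INR (S n)) with (1 - / (INR (S n) * / INR n)) by (rewrite HSn; field; lra).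
  lra. }
assert (Hd := pow_diff k u v Hu ltac:(assert (0 < / INR (S n)) by (apply Rinv_0_lt_compat; lra); lra)).
unfold F, B. fold v u.
replace (ln (M0 / INR (S n)) + INR k) with u
  by (unfold u, Rdiv; rewrite ln_mult, ln_Rinv; try lra; apply Rinv_0_lt_compat; lra).
rewrite fact_simpl, mult_INR.
assert (Hf := INR_fact_lt_0 k).
assert (HS : 0 < INR (S k)) by (apply lt_0_INR; lia).
replace (M0 * v ^ S k / (INR (S k) * INR (fact k)) - M0 * u ^ S k / (INR (S k) * INR (fact k)))
  with (M0 / (INR (S k) * INR (fact k)) * (v ^ S k - u ^ S k)) by (field; lra).
replace (M0 / INR (S n) * u ^ k / INR (fact k)) with
  (M0 / (INR (S k) * INR (fact k)) * (INR (S k) * u ^ k * / INR (S n))) by (field; lra).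
apply Rmult_le_compat_l.
- apply Rmult_le_pos; [lra|]. left; apply Rinv_0_lt_compat, Rmult_lt_0_compat; auto.
- assert (0 <= INR (S k) * u ^ k) by (apply Rmult_le_pos; [lra | apply pow_le; auto]).
  eapply Rle_trans; [|apply Hd].
  apply Rmult_le_compat_l; auto.
Qed.

Lemma B_final k M0 : 1 <= M0 ->
  B k M0 + F k M0 1 - F k M0 M0 <= B (S k) M0.
Proof.
intros HM.
assert (HL : 0 <= ln M0) by (rewrite <- ln_1; apply ln_le'; lra).
assert (Hk : 0 <= INR k) by apply pos_INR.
set (u := ln M0 + INR k).
assert (Hu : 0 <= u) by (unfold u; lra).
assert (HFM : 0 <= F k M0 M0).
{ unfold F. apply Rmult_le_pos; [apply Rmult_le_pos; [lra|apply pow_le; lra]|].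
  left; apply Rinv_0_lt_compat, INR_fact_lt_0. }
unfold F, B. rewrite ln_1, S_INR, fact_simpl, mult_INR.
replace (ln M0 - 0 + INR k) with u by (unfold u; ring).
replace (ln M0 + (INR k + 1)) with (u + 1) by (unfold u; ring).
fold u.
assert (Hf := INR_fact_lt_0 k).
assert (HS : 0 < INR (S k)) by (apply lt_0_INR; lia).
assert (Hb := pow_bin k u Hu).
assert (HF : 0 <= F k M0 M0) by exact HFM.
unfold F in HF.
replace (M0 * u ^ k / INR (fact k) + M0 * u ^ S k / (INR (S k) * INR (fact k)))
  with (M0 / (INR (S k) * INR (fact k)) * (u ^ S k + INR (S k) * u ^ k)) by (field; lra).
replace (M0 * (u + 1) ^ S k / (INR (S k) * INR (fact k)))
  with (M0 / (INR (S k) * INR (fact k)) * (u + 1) ^ S k) by (field; lra).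
assert (Hc : 0 <= M0 / (INR (S k) * INR (fact k))).
{ apply Rmult_le_pos; [lra|]. left; apply Rinv_0_lt_compat, Rmult_lt_0_compat; auto. }
assert (M0 / (INR (S k) * INR (fact k)) * (u ^ S k + INR (S k) * u ^ k) <=
        M0 / (INR (S k) * INR (fact k)) * (u + 1) ^ S k) by (apply Rmult_le_compat_l; auto).
rewrite fact_simpl, mult_INR in HF.
lra.
Qed.

Module CM.
Close Scope R_scope.
From mathcomp Require Import all_boot zify.
Set Implicit Arguments.
Unset Strict Implicit.
Unset Printing Implicit Defensive.


Definition D (r K M : nat) : nat :=
  #|[set f : {ffun 'I_r -> 'I_K} | (0 < \prod_(i < r) (f i : nat)) && (\prod_(i < r) (f i : nat) <= M)]|.

Lemma card_sum (T : finType) (P : pred T) : #|[set x | P x]| = \sum_(x : T) (P x : nat).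
Proof.
rewrite -sum1_card big_mkcond /=; apply: eq_bigr => x _; rewrite inE; by case: (P x).
Qed.

Section Cons.
Variables (T : finType) (r : nat).
Definition fcons (p : T * {ffun 'I_r -> T}) : {ffun 'I_r.+1 -> T} :=
  [ffun i => if unlift ord0 i is Some j then p.2 j else p.1].
Definition fsplit (f : {ffun 'I_r.+1 -> T}) : T * {ffun 'I_r -> T} :=
  (f ord0, [ffun j => f (lift ord0 j)]).
Lemma fconsK : cancel fcons fsplit.
Proof.
case=> x g; rewrite /fsplit /fcons /= ffunE unlift_none; congr pair.
by apply/ffunP => j; rewrite !ffunE liftK.
Qed.
Lemma fsplitK : cancel fsplit fcons.
Proof.
move=> f; apply/ffunP => i; rewrite /fcons ffunE /=.
case: unliftP => [j ->|->]; by rewrite ?ffunE.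
Qed.
End Cons.

Lemma D0 K M : D 0 K M = (0 < M).
Proof.
rewrite /D card_sum.
rewrite (eq_bigr (fun _ => (0 < M) : nat)); last by move=> f _; rewrite big_ord0.
rewrite sum_nat_const card_ffun !card_ord expn0 mul1n //.
Qed.

Lemma Drec r K M : 0 < M -> M < K ->
  D r.+1 K M = \sum_(1 <= x < M.+1) D r K (M %/ x).
Proof.
move=> M0 MK.
rewrite /D card_sum (reindex (@fcons _ r)); last first.
  by exists (@fsplit _ r) => f _; [rewrite fconsK | rewrite fsplitK].
rewrite (eq_bigr (fun p : ('I_K * {ffun 'I_r -> 'I_K}) =>
   ((0 < \prod_(i < r.+1) (fcons (p.1, p.2) i : nat)) &&
    (\prod_(i < r.+1) (fcons (p.1, p.2) i : nat) <= M)) : nat)); last by case.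
rewrite -(pair_bigA _ (fun (x : 'I_K) (g : {ffun 'I_r -> 'I_K}) =>
   ((0 < \prod_(i < r.+1) (fcons (x, g) i : nat)) &&
    (\prod_(i < r.+1) (fcons (x, g) i : nat) <= M)) : nat)) /=.
have E (x : 'I_K) (g : {ffun 'I_r -> 'I_K}) : \prod_(i < r.+1) (fcons (x, g) i : nat) = x * \prod_(i < r) (g i : nat).
  rewrite big_ord_recl /fcons ffunE unlift_none; congr muln.
  by apply: eq_bigr => i _; rewrite ffunE liftK.
under eq_bigr do under eq_bigr do rewrite E.
have -> : \sum_(x : 'I_K) \sum_(g : {ffun 'I_r -> 'I_K})
     ((0 < x * \prod_(i < r) (g i : nat)) && (x * \prod_(i < r) (g i : nat) <= M) : nat)
   = \sum_(x < K) (if 0 < x then D r K (M %/ x) else 0).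
  apply: eq_bigr => x _; rewrite /D card_sum.
  case: (posnP x) => [->|xp].
    by rewrite big1 // => g _; rewrite mul0n.
  apply: eq_bigr => g _; congr nat_of_bool.
  by rewrite muln_gt0 xp /= leq_divRL // mulnC.
rewrite -(big_mkord xpredT (fun x => if 0 < x then D r K (M %/ x) else 0)).
rewrite (big_cat_nat (n := M.+1)) //=.
rewrite [X in _ + X = _]big1_seq ?addn0; last first.
  move=> x; rewrite mem_index_iota => /and3P [_ Mx _].
  have xp : 0 < x by apply: leq_trans Mx.
  rewrite xp /D card_sum big1 // => g _.
  rewrite divn_small //.
  by case: (\prod_(i < r) (g i : nat)) => //.
rewrite big_ltn // /= add0n big_nat_cond [RHS]big_nat_cond.
by apply: eq_bigr => x /andP [/andP [x0 _] _]; rewrite x0.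
Qed.

Lemma tau_le r a N : a <= N ->
  tau r a <= #|[set f : {ffun 'I_r -> 'I_N.+1} | \prod_(i < r) (f i : nat) == a]|.
Proof.
move=> aN; have H : a.+1 <= N.+1 by [].
pose w (f : {ffun 'I_r -> 'I_a.+1}) : {ffun 'I_r -> 'I_N.+1} := [ffun i => widen_ord H (f i)].
have winj : injective w.
  move=> f g /ffunP E; apply/ffunP => i; move: (E i); rewrite !ffunE.
  by move/(congr1 val) => /= /val_inj.
rewrite /tau -(card_imset _ winj); apply: subset_leq_card.
apply/subsetP => _ /imsetP [f Hf ->]; move: Hf; rewrite !inE.
rewrite /w; move=> Hp; under eq_bigr do rewrite ffunE; by [].
Qed.

Lemma sum_ind p N : \sum_(1 <= a < N.+1) (p == a : nat) = ((0 < p) && (p <= N)).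
Proof.
elim: N => [|N IH]; first by rewrite big_geq //; case: p.
rewrite big_nat_recr //= IH.
case: (ltngtP p N.+1) => H; try lia.
Qed.

Lemma sum_tau_le r N : sum_tau r N <= D r N.+1 N.
Proof.
rewrite /sum_tau; apply: (@leq_trans (\sum_(1 <= a < N.+1)
   #|[set f : {ffun 'I_r -> 'I_N.+1} | \prod_(i < r) (f i : nat) == a]|)).
  rewrite big_nat_cond [X in _ <= X]big_nat_cond.
  by apply: leq_sum => a /andP [/andP [_ aN] _]; apply: tau_le.
rewrite /D card_sum.
under eq_bigr do rewrite card_sum.
rewrite exchange_big /=.
by apply: leq_sum => f _; rewrite sum_ind.
Qed.

Open Scope R_scope.

Unset Implicit Arguments.
Lemma INR_addn a b : INR (a + b)%N = INR a + INR b.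
Proof. by rewrite -plusE plus_INR. Qed.
Lemma INR_muln a b : INR (a * b)%N = INR a * INR b.
Proof. by rewrite -multE mult_INR. Qed.
Lemma INR_leq a b : (a <= b)%N -> INR a <= INR b.
Proof. by move/leP; apply: le_INR. Qed.

Lemma div_bound M x : (0 < x)%N -> INR (M %/ x) <= INR M / INR x.
Proof.
move=> x0.
have Hx : 0 < INR x by apply: lt_0_INR; apply/ltP.
have H : INR (M %/ x) * INR x <= INR M by rewrite -INR_muln; apply: INR_leq; apply: leq_divM.
apply (Rmult_le_reg_r (INR x)) => //.
rewrite /Rdiv Rmult_assoc Rinv_l; lra.
Qed.

Lemma sum_bound k K M (IH : forall m, (1 <= m)%N -> (m < K)%N -> INR (D k.+1 K m) <= B k (INR m))
  (M1 : (1 <= M)%N) (MK : (M < K)%N) n :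
  (1 <= n)%N -> (n <= M)%N ->
  INR (\sum_(1 <= x < n.+1) D k.+1 K (M %/ x)) <= B k (INR M) + F k (INR M) 1 - F k (INR M) (INR n).
Proof.
elim: n => [//|n IHn] _ nM.
case: (posnP n) => [->|n0].
  rewrite big_nat1 divn1 /=; have := IH M M1 MK; lra.
have E : (\sum_(1 <= x < n.+2) D k.+1 K (M %/ x) =
  \sum_(1 <= x < n.+1) D k.+1 K (M %/ x) + D k.+1 K (M %/ n.+1))%N by rewrite big_nat_recr.
rewrite E INR_addn.
have H1 := IHn n0 (ltnW nM).
have Hq1 : (1 <= M %/ n.+1)%N by rewrite divn_gt0.
have Hq2 : (M %/ n.+1 < K)%N by apply: leq_ltn_trans (leq_div _ _) MK.
have H2 := IH _ Hq1 Hq2.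
have H3 : B k (INR (M %/ n.+1)) <= B k (INR M / INR n.+1).
  apply: B_mono; first by have := INR_leq _ _ Hq1; simpl.
  exact: div_bound.
have H4 : B k (INR M / INR n.+1) <= F k (INR M) (INR n) - F k (INR M) (INR n.+1).
  apply: F_step; first by apply/leP.
  exact: INR_leq _ _ nM.
lra.
Qed.

Lemma Dbound k : forall K M, (1 <= M)%N -> (M < K)%N -> INR (D k.+1 K M) <= B k (INR M).
Proof.
elim: k => [|k IH] K M M1 MK.
  rewrite Drec //.
  have -> : (\sum_(1 <= x < M.+1) D 0 K (M %/ x) = \sum_(1 <= x < M.+1) 1)%N.
    rewrite big_nat_cond [RHS]big_nat_cond; apply: eq_bigr => x /andP [/andP [x0 xM] _].
    by rewrite D0 divn_gt0 // -ltnS xM.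
  rewrite sum_nat_const_nat muln1 subn1 /=.
  rewrite /B /= Rmult_1_r /Rdiv Rinv_1 Rmult_1_r; lra.
rewrite Drec //.
have := sum_bound _ _ _ (IH K) M1 MK _ M1 (leqnn M).
have := B_final k (INR M) ltac:(have := INR_leq _ _ M1; simpl; lra).
lra.
Qed.

Lemma main' (c : R) (r N : nat) :
  0 < c -> le 1 r -> le 1 N ->
  INR (Nat.sub r 1) <= c * ln (INR N) ->
  INR (sum_tau r N) <=
    (1 + c) ^ (Nat.sub r 1) / INR (fact (Nat.sub r 1)) * INR N * (ln (INR N)) ^ (Nat.sub r 1).
Proof.
move=> Hc Hr /leP HN; move: Hr; case: r => [|k] Hr; first by inversion Hr.
rewrite /= Nat.sub_0_r => Hk.
have H1 : INR (sum_tau k.+1 N) <= INR (D k.+1 N.+1 N) by apply: INR_leq; apply: sum_tau_le.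
have H2 := Dbound k _ _ HN (ltnSn N).
have HN1 : 1 <= INR N by have := INR_leq _ _ HN; simpl.
have HL : 0 <= ln (INR N) by rewrite -ln_1; apply: ln_le'; lra.
have Hk0 : 0 <= INR k by apply: pos_INR.
have H3 : (ln (INR N) + INR k) ^ k <= (1 + c) ^ k * ln (INR N) ^ k.
  rewrite -Rpow_mult_distr; apply: pow_incr; nra.
have Hf := INR_fact_lt_0 k.
have H4 : B k (INR N) <= (1 + c) ^ k / INR (fact k) * INR N * ln (INR N) ^ k.
  rewrite /B.
  have -> : (1 + c) ^ k / INR (fact k) * INR N * ln (INR N) ^ k =
            INR N * ((1 + c) ^ k * ln (INR N) ^ k) / INR (fact k) by field; lra.
  rewrite /Rdiv; apply: Rmult_le_compat_r; first by left; apply: Rinv_0_lt_compat.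
  apply: Rmult_le_compat_l; lra.
lra.
Qed.
End CM.

Theorem corollary2p1 (c : R) (r N : nat) :
  0 < c -> (1 <= r)%nat -> (1 <= N)%nat ->
  INR (r - 1) <= c * ln (INR N) ->
  INR (sum_tau r N) <=
    (1 + c) ^ (r - 1) / INR (fact (r - 1)) * INR N * (ln (INR N)) ^ (r - 1).
Proof.
  exact (CM.main' c r N).
Qed.
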